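(* Let $q$ be a distribution over $[n]$, let $S\subseteq[n]$ be nonempty with $R(q,S)\ge1$, let $0\le\varepsilon_1<\varepsilon_2$ and $\delta>0$. Then \[ \mathsf{SC}(q,\varepsilon_1,\varepsilon_2,\delta)\ \ge\ \frac{4}{q(S)}\cdot \mathsf{SC}\Big(\mathrm{Unif}_{R(q,S)},\ \frac{4\varepsilon_1}{q(S)},\ \frac{4\varepsilon_2}{q(S)},\ \delta\Big). \]
   Context: For a distribution $q$ over a finite domain, $0\le\varepsilon_1<\varepsilon_2$ and $\delta>0$, $\mathsf{SC}(q,\varepsilon_1,\varepsilon_2,\delta)$ denotes the minimum $m$ such that some tester, given $\mathrm{Poi}(m)$ i.i.d. samples (Poissonized sampling) from an unknown distribution $p$ on the same domain and the full description of $q$, correctly distinguishes $\|p-q\|_1\le\varepsilon_1$ from $\|p-q\|_1\ge\varepsilon_2$ with probability at least $1-\delta$ for every such $p$. For $S\subseteq[n]$, $q(S)=\sum_{i\in S}q_i$, $M(q,S)=\max_{i\in S}q_i$ and $R(q,S)=\big\lfloor \frac{q(S)}{2M(q,S)}\big\rfloor$. $\mathrm{Unif}_t$ is the uniform distribution on $[t]$. *)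

(* Defs.v *)
From HB Require Import structures.
From mathcomp Require Import all_boot all_order all_algebra.
From mathcomp Require Import all_classical all_reals all_analysis.
Set Implicit Arguments. Unset Strict Implicit. Unset Printing Implicit Defensive.
Import Order.TTheory GRing.Theory Num.Theory.
Local Open Scope classical_set_scope.
Local Open Scope ring_scope.

Section Defs.
Variable R : realType.

Definition is_distr (n : nat) (p : 'I_n -> R) : Prop :=
  (forall i, 0 <= p i) /\ \sum_(i < n) p i = 1.

Definition l1dist (n : nat) (p q : 'I_n -> R) : R := \sum_(i < n) `|p i - q i|.

(* A (possibly randomized) tester: for each number k of samples and each
   sample sequence of length k, the probability of answering "close". *)
Definition tester (n : nat) := forall k : nat, k.-tuple 'I_n -> R.

Definition is_tester (n : nat) (T : tester n) : Prop :=
  forall k (t : k.-tuple 'I_n), 0 <= T k t <= 1.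

(* Probability that T answers "close" when given Poi(m) i.i.d. samples from p:
   sum_k P[Poi(m) = k] * sum_{t in [n]^k} (prod_j p(t_j)) * T(t). *)
Definition accept_prob (n : nat) (T : tester n) (p : 'I_n -> R) (m : R) : \bar R :=
  (\sum_(0 <= k <oo)
     ((expR (- m) * m ^+ k / (k`!)%:R *
       \sum_(t : k.-tuple 'I_n) ((\prod_(j < k) p (tnth t j)) * T k t))%:E))%E.

Definition solves (n : nat) (q : 'I_n -> R) (e1 e2 d m : R) : Prop :=
  exists T : tester n, is_tester T /\
    forall p : 'I_n -> R, is_distr p ->
      (l1dist p q <= e1 -> ((1 - d)%:E <= accept_prob T p m)%E) /\
      (e2 <= l1dist p q -> (accept_prob T p m <= d%:E)%E).

(* Sample complexity SC(q, e1, e2, d): the least (infimum) m >= 0 for which a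
   tester exists; +oo if there is none. *)
Definition SC (n : nat) (q : 'I_n -> R) (e1 e2 d : R) : \bar R :=
  ereal_inf [set m%:E | m in [set m : R | 0 <= m /\ solves q e1 e2 d m]].

Definition qmass (n : nat) (q : 'I_n -> R) (S : {set 'I_n}) : R :=
  \sum_(i in S) q i.
Definition qmax (n : nat) (q : 'I_n -> R) (S : {set 'I_n}) : R :=
  \big[Num.max/0]_(i in S) q i.
Definition Rqs (n : nat) (q : 'I_n -> R) (S : {set 'I_n}) : nat :=
  Num.truncn (qmass q S / (2 * qmax q S)).

Definition unif (t : nat) : 'I_t -> R := fun _ => 1 / t%:R.

End Defs.

(* Main.v *)
Require Import Defs.
From HB Require Import structures.
From mathcomp Require Import all_boot all_order all_algebra.
From mathcomp Require Import all_classical all_reals all_analysis.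
From mathcomp Require Import ring lra.
Import Order.TTheory GRing.Theory Num.Theory.
Local Open Scope ring_scope.
Set Implicit Arguments. Unset Strict Implicit. Unset Printing Implicit Defensive.

Section Comb.
Variable R : realType.

Lemma sum_tuple_cons (X : finType) k (F : k.+1.-tuple X -> R) :
  \sum_(t : k.+1.-tuple X) F t =
  \sum_(x : X) \sum_(t : k.-tuple X) F [tuple of x :: t].
Proof.
rewrite pair_big /=.
rewrite (reindex (fun p : X * k.-tuple X => [tuple of p.1 :: p.2])) /=.
  by apply: eq_bigr => -[x t].
exists (fun t : k.+1.-tuple X => (thead t, [tuple of behead t])).
  by move=> [x t] _ /=; congr pair; apply: val_inj.
by move=> t _ /=; rewrite [RHS]tuple_eta; apply: val_inj.
Qed.

Variables (n r : nat).
Definition X := ('I_n + ('I_r * 'I_n))%type.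
Definition pix (x : X) : 'I_n := match x with inl i => i | inr (_, i) => i end.
Fixpoint labs (s : seq X) : seq 'I_r :=
  match s with
  | [::] => [::]
  | inl _ :: s' => labs s'
  | inr (j, _) :: s' => j :: labs s'
  end.

Lemma size_labs s : (size (labs s) <= size s)%N.
Proof. by elim: s => [|[x|[j x]] s IH] //=; rewrite ?ltnS // leqW. Qed.

Variables (f : 'I_n -> R) (h : 'I_r -> 'I_n -> R).
Definition phix (x : X) : R := match x with inl i => f i | inr (j, i) => h j i end.
Definition rhox (p' : 'I_r -> R) (x : X) : R :=
  match x with inl i => f i | inr (j, i) => p' j * h j i end.

Lemma rho_prod p' (s : seq X) :
  \prod_(x <- s) rhox p' x = (\prod_(j <- labs s) p' j) * \prod_(x <- s) phix x.
Proof.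
elim: s => [|[i|[j i]] s IH] /=; first by rewrite !big_nil mulr1.
  by rewrite !big_cons IH mulrCA.
by rewrite !big_cons IH /=; rewrite !mulrA; congr (_ * _); rewrite mulrAC.
Qed.

Definition ppx p' (i : 'I_n) : R := \sum_(x | pix x == i) rhox p' x.

Lemma sum_tuple0 (Y : finType) (G : 0.-tuple Y -> R) :
  \sum_(t : 0.-tuple Y) G t = G [tuple].
Proof. by rewrite (big_pred1 [tuple]) // => t /=; apply/esym/eqP; exact: tuple0. Qed.

Lemma pushE p' k (F : k.-tuple 'I_n -> R) :
  \sum_(t : k.-tuple 'I_n) (\prod_(i <- t) ppx p' i) * F t =
  \sum_(w : k.-tuple X) (\prod_(x <- w) rhox p' x) * F (map_tuple pix w).
Proof.
elim: k F => [|k IH] F.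
  rewrite !sum_tuple0 !big_nil; congr (_ * F _); exact: val_inj.
rewrite !sum_tuple_cons.
transitivity (\sum_(i : 'I_n) \sum_(x | pix x == i)
   rhox p' x * \sum_(w : k.-tuple X) (\prod_(y <- w) rhox p' y) *
       F [tuple of i :: map_tuple pix w]).
  apply: eq_bigr => i _.
  under eq_bigr do rewrite big_cons -mulrA.
  rewrite -big_distrr /= (IH (fun t => F [tuple of i :: t])) big_distrl /=.
  by apply: eq_bigr => x _.
rewrite [RHS](partition_big pix xpredT) //=.
apply: eq_bigr => i _; apply: eq_bigr => x /eqP <-.
rewrite big_distrr /=; apply: eq_bigr => w _.
rewrite big_cons -mulrA; congr (_ * (_ * F _)); exact: val_inj.
Qed.
Definition Nc k (y : seq 'I_r) : R :=
  \sum_(w : k.-tuple X | labs w == y) \prod_(x <- w) phix x.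

Lemma countN (c : R) k (y : seq 'I_r) :
  (\sum_i f i = 1 - c) -> (forall j, \sum_i h j i = c) ->
  Nc k y = 'C(k, size y)%:R * c ^+ size y * (1 - c) ^+ (k - size y).
Proof.
move=> Hf Hh; elim: k y => [|k IH] y.
  rewrite /Nc big_mkcond sum_tuple0 /= big_nil.
  by case: y => [|j y] /=; rewrite ?bin0 ?mul1r ?expr0 // bin0n mul0r mul0r.
rewrite /Nc big_mkcond sum_tuple_cons big_sumType /=.
transitivity ((1 - c) * Nc k y +
   \sum_(p : 'I_r * 'I_n) h p.1 p.2 *
      (if y is j0 :: y' then (p.1 == j0)%:R * Nc k y' else 0)).
  congr (_ + _).
    rewrite -Hf big_distrl /=; apply: eq_bigr => i _.
    rewrite /Nc big_distrr /= [RHS]big_mkcond /=.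
    apply: eq_bigr => w _.
    by rewrite big_cons; case: ifP; rewrite ?mulr0.
  apply: eq_bigr => -[j i] _ /=.
  case: y => [|j0 y'].
    by rewrite mulr0; apply: big1 => w _.
  rewrite /Nc big_distrr /= big_distrr /= [RHS]big_mkcond /=; apply: eq_bigr => w _.
  rewrite big_cons /= eqseq_cons.
  by case: (j == j0); case: (labs w == y'); rewrite ?mul1r ?mul0r ?mulr0.
case: y => [|j0 y'] /=.
  rewrite big1 ?addr0 ?IH /=; last by move=> ? _; rewrite mulr0.
  by rewrite !bin0 !subn0 exprS; ring.
rewrite -(pair_big xpredT xpredT (fun j i => h j i * ((j == j0)%:R * Nc k y'))) /=.
rewrite (bigD1 j0) //= [X in _ + (_ + X)]big1 ?addr0; last first.
  by move=> j /negbTE ->; apply: big1 => i _; rewrite mul0r mulr0.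
rewrite eqxx mul1r -big_distrl /= Hh !IH /= binS natrD.
set s := size y'.
rewrite subSS.
have [lt|ge] := ltnP s k.
  have -> : (k - s = (k - s.+1).+1)%N by rewrite subnS prednK // subn_gt0.
  rewrite !exprS; ring.
rewrite (bin_small (n:=k)) ?ltnS //.
rewrite [(k - s)%N](_ : _ = 0%N); last by apply/eqP; rewrite subn_eq0.
rewrite exprS; ring.
Qed.
Lemma count1 (T : finType) k (s : seq T) : (size s <= k)%N ->
  \sum_(k' < k.+1) \sum_(y : k'.-tuple T) ((s == val y)%:R : R) = 1.
Proof.
move=> Hs; have Hs' : (size s < k.+1)%N by [].
rewrite (bigD1 (Ordinal Hs')) //= [X in _ + X]big1 ?addr0; last first.
  move=> k' Hk; apply: big1 => y _.
  case: eqP => // E; move: Hk; rewrite -val_eqE /= E size_tuple eqxx //.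
rewrite (bigD1 (in_tuple s)) //= eqxx big1 ?addr0 // => y Hy.
case: eqP => // E; move/eqP: Hy; case; apply: val_inj => /=; by rewrite -E.
Qed.

Lemma partE k (p' : 'I_r -> R) (F : k.-tuple X -> R) :
  \sum_(w : k.-tuple X) (\prod_(j <- labs w) p' j) * F w =
  \sum_(k' < k.+1) \sum_(y : k'.-tuple 'I_r)
     (\prod_(j <- y) p' j) * \sum_(w : k.-tuple X | labs w == y) F w.
Proof.
transitivity (\sum_(k' < k.+1) \sum_(y : k'.-tuple 'I_r) \sum_(w : k.-tuple X)
   ((labs w == y)%:R * ((\prod_(j <- labs w) p' j) * F w))); last first.
  apply: eq_bigr => k' _; apply: eq_bigr => y _.
  rewrite big_distrr [RHS]big_mkcond /=; apply: eq_bigr => w _.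
  by case: eqP => [->|_]; rewrite ?mul1r ?mul0r ?mulr0.
under [RHS]eq_bigr do rewrite exchange_big /=.
rewrite [RHS]exchange_big /=; apply: eq_bigr => w _.
set G := (\prod_(j <- labs w) p' j * F w).
transitivity ((\sum_(k' < k.+1) \sum_(y : k'.-tuple 'I_r) ((labs w == val y)%:R : R)) * G); last first.
  by rewrite big_distrl; apply: eq_bigr => k' _; rewrite big_distrl.
rewrite count1 ?mul1r //.
exact: leq_trans (size_labs _) (eq_leq (size_tuple w)).
Qed.
End Comb.


Section Sim.
Variable R : realType.
Definition Pm (m : R) k := expR (- m) * m ^+ k / (k`!)%:R.

Lemma Pm_ge0 m k : 0 <= m -> 0 <= Pm m k.
Proof. by move=> m0; rewrite /Pm !mulr_ge0 ?expR_ge0 ?exprn_ge0 // invr_ge0. Qed.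

Lemma exp_eseries (x : R) :
  (\sum_(i <oo) (x ^+ i / (i`!)%:R)%:E = (expR x)%:E)%E.
Proof.
rewrite /expR -EFin_lim; last exact: is_cvg_series_exp_coeff.
by apply: congr_lim; apply/funext => N; rewrite /series /= sumEFin.
Qed.

Lemma Pm_sum (x : R) : 0 <= x -> (\sum_(l <oo) (Pm x l)%:E = 1)%E.
Proof.
move=> x0; rewrite /Pm.
under eq_eseriesr => i _ do rewrite -mulrA EFinM.
rewrite nneseriesZl; last by move=> i _; rewrite lee_fin divr_ge0 ?exprn_ge0.
by rewrite exp_eseries -EFinM -expRD addNr expR0.
Qed.

Variables (n r : nat) (f : 'I_n -> R) (h : 'I_r -> 'I_n -> R) (c m : R)
  (T : tester R n).
Hypotheses (f0 : forall i, 0 <= f i) (h0 : forall j i, 0 <= h j i)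
  (Hf : \sum_i f i = 1 - c) (Hh : forall j, \sum_i h j i = c)
  (c0 : 0 < c) (c1 : c < 1) (m0 : 0 <= m) (HT : is_tester T).

Definition G k (y : seq 'I_r) : R :=
  \sum_(w : k.-tuple (X n r) | labs w == y)
     (\prod_(x <- w) phix f h x) * @T k (map_tuple (@pix n r) w).

Lemma phix_ge0 x : 0 <= phix f h x.
Proof. by case: x => [i|[j i]] /=. Qed.

Lemma G_ge0 k y : 0 <= G k y.
Proof.
apply: sumr_ge0 => w _; apply: mulr_ge0; last by case/andP: (HT (map_tuple (@pix n r) w)).
by apply: prodr_ge0 => x _; exact: phix_ge0.
Qed.

Lemma G_le k y : G k y <= Nc f h k y.
Proof.
apply: ler_sum => w _; apply: ler_piMr; first by apply: prodr_ge0 => x _; exact: phix_ge0.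
by case/andP: (HT (map_tuple (@pix n r) w)).
Qed.

Definition beta k' l : R := expR (- ((1 - c) * m)) * m ^+ l /
   ((l`!)%:R * ('C(l + k', k'))%:R * c ^+ k').

Lemma beta_ge0 k' l : 0 <= beta k' l.
Proof.
rewrite /beta mulr_ge0 ?invr_ge0 ?mulr_ge0 ?expR_ge0 ?exprn_ge0 //; exact: ltW.
Qed.

Lemma beta_N l (y : seq 'I_r) :
  beta (size y) l * Nc f h (l + size y) y = Pm ((1 - c) * m) l.
Proof.
rewrite (countN _ _ Hf Hh) addnK /beta /Pm exprMn.
have C0 : ('C(l + size y, size y))%:R != 0 :> R.
  by rewrite pnatr_eq0 -lt0n bin_gt0 leq_addl.
have F0 : (l`!)%:R != 0 :> R by rewrite pnatr_eq0 -lt0n fact_gt0.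
have cp : c ^+ size y != 0 by rewrite expf_neq0 // gt_eqF.
field; rewrite C0 F0 cp //.
Qed.

Lemma Pm_split k' l : Pm m (l + k') = Pm (c * m) k' * beta k' l.
Proof.
rewrite /Pm /beta.
have -> : expR (- m) = expR (- (c * m)) * expR (- ((1 - c) * m)).
  by rewrite -expRD; congr expR; ring.
have E := bin_fact (leq_addl l k'); rewrite addnK in E.
rewrite -E !natrM.
have C0 : ('C(l + k', k'))%:R != 0 :> R.
  by rewrite pnatr_eq0 -lt0n bin_gt0 leq_addl.
have F0 : (l`!)%:R != 0 :> R by rewrite pnatr_eq0 -lt0n fact_gt0.
have F1 : (k'`!)%:R != 0 :> R by rewrite pnatr_eq0 -lt0n fact_gt0.
have cp : c ^+ k' != 0 by rewrite expf_neq0 // gt_eqF.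
rewrite exprMn exprD; field; rewrite C0 F0 F1 cp //.
Qed.

Local Open Scope ereal_scope.
Definition Sser k' (y : seq 'I_r) : \bar R :=
  \sum_(l <oo) (beta k' l * G (l + k') y)%:E.

Lemma Sser_ge0 k' y : 0 <= Sser k' y.
Proof.
by apply: nneseries_ge0 => l _ _; rewrite lee_fin mulr_ge0 ?beta_ge0 ?G_ge0.
Qed.

Lemma Sser_le1 k' (y : k'.-tuple 'I_r) : Sser k' y <= 1.
Proof.
rewrite -(Pm_sum (x := ((1 - c) * m)%R)); last by rewrite mulr_ge0 // subr_ge0 ltW.
apply: lee_nneseries.
  by move=> l _ _; rewrite lee_fin mulr_ge0 ?beta_ge0 ?G_ge0.
move=> l _; rewrite -(beta_N l y) size_tuple lee_fin.
by apply: ler_wpM2l; [exact: beta_ge0 | exact: G_le].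
Qed.

Lemma Sser_fin k' (y : k'.-tuple 'I_r) : Sser k' y \is a fin_num.
Proof.
rewrite ge0_fin_numE ?Sser_ge0 //; exact: le_lt_trans (Sser_le1 y) (ltey _).
Qed.

Definition Tp : tester R r := fun k' (y : k'.-tuple 'I_r) => fine (Sser k' y).

Lemma Tp_valid : is_tester Tp.
Proof.
move=> k' y; rewrite /Tp fine_ge0 ?Sser_ge0 //=.
by rewrite -lee_fin fineK ?Sser_fin ?Sser_le1.
Qed.

Lemma TpE k' (y : k'.-tuple 'I_r) : (Tp y)%:E = Sser k' y.
Proof. by rewrite /Tp fineK ?Sser_fin. Qed.
Local Close Scope ereal_scope.

Lemma A_eq (p' : 'I_r -> R) k :
  \sum_(t : k.-tuple 'I_n) (\prod_(j < k) ppx f h p' (tnth t j)) * @T k t =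
  \sum_(k' < k.+1) \sum_(y : k'.-tuple 'I_r) (\prod_(j <- y) p' j) * G k y.
Proof.
under eq_bigr do rewrite -(big_tuple _ _ _ xpredT).
rewrite pushE.
under eq_bigr do rewrite rho_prod -mulrA.
by rewrite partE.
Qed.

Lemma sim_accept (p' : 'I_r -> R) : (forall j, 0 <= p' j) ->
  accept_prob Tp p' (c * m) = accept_prob T (ppx f h p') m.
Proof.
move=> p0.
pose b k' l := (Pm (c * m) k' * \sum_(y : k'.-tuple 'I_r)
   (\prod_(j <- y) p' j) * (beta k' l * G (l + k') y))%R.
have t0 kk (y : seq 'I_r) l :
    (0 <= (\prod_(j <- y) p' j) * (beta kk l * G (l + kk) y))%R.
  apply: mulr_ge0; first by apply: prodr_ge0 => j _; exact: p0.
  exact: mulr_ge0 (beta_ge0 _ _) (G_ge0 _ _).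
have b0 k' l : (0 <= b k' l)%R.
  rewrite mulr_ge0 ?Pm_ge0 ?mulr_ge0 ?(ltW c0) //; apply: sumr_ge0 => y _.
  exact: t0.
pose a := fun k kk : nat => if (kk <= k)%N then (b kk (k - kk)%N)%:E else 0%E.
have a0 k kk : (0 <= a k kk)%E by rewrite /a; case: ifP; rewrite // lee_fin.
have S1 k : ((expR (- m) * m ^+ k / (k`!)%:R *
      \sum_(t : k.-tuple 'I_n) ((\prod_(j < k) ppx f h p' (tnth t j)) * @T k t))%:E
    = \sum_(k' <oo) a k k')%E.
  rewrite (nneseries_split 0 k.+1); last by move=> i _.
  rewrite [X in (_ + X)%E]eseries0 ?adde0; last by move=> i; rewrite add0n => Hi _; rewrite /a leqNgt Hi.
  rewrite add0n big_mkord.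
  rewrite (eq_bigr (fun i : 'I_k.+1 => (b i (k - i)%N)%:E)); last first.
    by move=> i _; rewrite /a -ltnS ltn_ord.
  rewrite sumEFin; congr EFin.
  rewrite A_eq big_distrr /=; apply: eq_bigr => k' _.
  have Hk : (k' <= k)%N by rewrite -ltnS.
  rewrite /b -{1 2}(subnK Hk) -/(Pm m _) Pm_split -mulrA; congr (_ * _).
  rewrite big_distrr /=; apply: eq_bigr => y _.
  rewrite subnK //; ring.
rewrite /accept_prob.
under [RHS]eq_eseriesr do rewrite S1.
rewrite nneseries_interchange //.
apply: eq_eseriesr => k' _.
rewrite (nneseries_split 0 k'); last by move=> i _.
have -> : (\sum_(0 <= i < 0 + k') a i k' = 0)%E.
  by rewrite big_nat_cond big1 // => i /andP[/andP[_ Hi] _]; rewrite /a leqNgt Hi.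
rewrite add0e.
rewrite -nneseries_addn //.
under eq_eseriesr do rewrite /a leq_addl addnK /b EFinM.
rewrite nneseriesZl; last by move=> i _; rewrite lee_fin; apply: sumr_ge0 => y _.
rewrite EFinM; congr (_ * _)%E.
under eq_eseriesr do rewrite -sumEFin.
rewrite nneseries_sum; last by move=> y l _; rewrite lee_fin.
rewrite -sumEFin; apply: eq_bigr => y _.
under eq_eseriesr do rewrite EFinM.
rewrite nneseriesZl; last by move=> i _; rewrite lee_fin mulr_ge0 ?beta_ge0 ?G_ge0.
by rewrite EFinM -(big_tuple _ _ _ xpredT) TpE.
Qed.
End Sim.

Section Blocks.
Variables (R : realType) (n : nat) (q : 'I_n -> R) (w M : R).
Hypotheses (q0 : forall i, 0 <= q i) (w0 : 0 <= w) (M0 : 0 <= M).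

Lemma pick_block (A : {set 'I_n}) : (forall i, i \in A -> q i <= M) ->
  w <= \sum_(i in A) q i ->
  exists B : {set 'I_n}, [/\ B \subset A, w <= \sum_(i in B) q i &
                           \sum_(i in B) q i <= w + M].
Proof.
move=> HM; move: {2}#|A| (leqnn #|A|) => k; elim: k A HM => [|k IH] A HM Hk Hw.
  have A0 : A = finset.set0 by apply/eqP; rewrite -cards_eq0 -leqn0.
  rewrite A0 big_set0 in Hw *; exists finset.set0; rewrite big_set0; split; [exact: subxx | exact: Hw | exact: addr_ge0].
have [le|gt] := leP (\sum_(i in A) q i) (w + M); first by exists A.
have : A != finset.set0.
  apply/eqP => A0; move: gt; rewrite A0 big_set0 => gt.
  have := addr_ge0 w0 M0; lra.
case/set0Pn => a Ha.
have HA : \sum_(i in A) q i = q a + \sum_(i in A :\ a) q i by rewrite (big_setD1 a).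
have [|||B [HB1 HB2 HB3]] := IH (A :\ a).
- by move=> i; rewrite finset.in_setD1 => /andP[_ /HM].
- by move: Hk; rewrite (cardsD1 a A) Ha add1n ltnS.
- move: gt; rewrite HA; have := HM a Ha; lra.
exists B; split => //.
apply/fintype.subsetP => x /(fintype.subsetP HB1); by rewrite finset.in_setD1 => /andP[].
Qed.

Lemma blocks k (A : {set 'I_n}) : (forall i, i \in A -> q i <= M) ->
  k%:R * (w + M) <= \sum_(i in A) q i ->
  exists g : 'I_n -> nat, forall j, (j < k)%N ->
    w <= \sum_(i in A | g i == j) q i.
Proof.
elim: k A => [|k IH] A HM Hs; first by exists (fun _ => 0%N).
have [|B [HB1 HB2 HB3]] := pick_block HM.
  apply: le_trans Hs; have h1 : 0 <= k%:R * (w + M) by rewrite mulr_ge0 ?addr_ge0.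
  rewrite mulrSr; have := M0; lra.
have HS : \sum_(i in A) q i = \sum_(i in B) q i + \sum_(i in A :\: B) q i.
  by rewrite (big_setID B) /=; move/finset.setIidPr: HB1 => ->.
have [||g Hg] := IH (A :\: B).
- by move=> i; rewrite finset.in_setD => /andP[_ /HM].
- move: Hs; rewrite HS mulrSr; lra.
exists (fun i => if i \in B then 0%N else (g i).+1) => -[|j] Hj.
  rewrite (eq_bigl (fun i => i \in B)); first exact: HB2.
  move=> i /=.
  case: ifP => iB; rewrite ?andbT ?andbF //.
  exact: (fintype.subsetP HB1).
apply: le_trans (Hg j Hj) _; rewrite le_eqVlt; apply/orP; left; apply/eqP.
apply: eq_bigl => i; rewrite finset.in_setD.
by case: (i \in B) => //=; rewrite ?andbF.
Qed.
End Blocks.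

Section Final.
Variable R : realType.

Lemma block_weights n r (q : 'I_n -> R) (S : {set 'I_n}) (w M : R) :
  (0 < r)%N -> (forall i, 0 <= q i) -> 0 < w -> 0 <= M ->
  (forall i, i \in S -> q i <= M) -> r%:R * (w + M) <= \sum_(i in S) q i ->
  exists (g : 'I_n -> 'I_r) (b : 'I_n -> R),
    (forall i, 0 <= b i <= q i) /\ (forall j, \sum_(i | g i == j) b i = w).
Proof.
move=> r0 q0 w0 M0 HM Hs.
have [g0 Hg0] := blocks (q:=q) (ltW w0) M0 HM Hs.
pose mj (j : nat) := \sum_(i in S | g0 i == j) q i.
pose j0 : 'I_r := Ordinal r0.
exists (fun i => insubd j0 (g0 i)).
exists (fun i => if (i \in S) && (g0 i < r)%N then q i * (w / mj (g0 i)) else 0).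
split.
  move=> i; case: ifP => [/andP[iS ir]|_]; last by rewrite lexx q0.
  have mpos : 0 < mj (g0 i) := lt_le_trans w0 (Hg0 _ ir).
  rewrite mulr_ge0 ?q0 ?divr_ge0 ?(ltW w0) ?(ltW mpos) //=.
  by rewrite ler_piMr ?q0 // ler_pdivrMr // mul1r Hg0.
move=> j.
have mpos : 0 < mj j := lt_le_trans w0 (Hg0 _ (ltn_ord j)).
transitivity (\sum_(i in S | g0 i == j) q i * (w / mj j)); last first.
  by rewrite -big_distrl /= -/(mj j) mulrCA mulfV ?mulr1 // gt_eqF.
rewrite big_mkcond [RHS]big_mkcond /=; apply: eq_bigr => i _.
case iS: (i \in S) => /=; last by case: ifP.
have [ir|ir] := ltnP (g0 i) r.
  rewrite -val_eqE /= val_insubd ir.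
  by case: eqP => // ->.
rewrite if_same; case: eqP => // E.
by move: (ltn_ord j); rewrite -E ltnNge ir.
Qed.

Lemma ppxE n r (f : 'I_n -> R) (h : 'I_r -> 'I_n -> R) p' i :
  ppx f h p' i = f i + \sum_j p' j * h j i.
Proof.
rewrite /ppx big_sumType /=; congr (_ + _).
  by rewrite (big_pred1 i).
transitivity (\sum_(p : 'I_r * 'I_n | p.2 == i) p' p.1 * h p.1 p.2).
  by apply: eq_big => -[j i'].
rewrite -(pair_big_dep xpredT (fun _ i' => i' == i) (fun j i' => p' j * h j i')) /=.
by apply: eq_bigr => j _; rewrite (big_pred1 i).
Qed.

Lemma reduce n (q : 'I_n -> R) (S : {set 'I_n}) e1 e2 d m :
  is_distr q -> (1 <= Rqs q S)%N -> 0 <= m -> solves q e1 e2 d m ->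
  solves (@unif R (Rqs q S)) (4 * e1 / qmass q S) (4 * e2 / qmass q S) d
         (qmass q S / 4 * m).
Proof.
move=> [q0 q1] r1 m0 [T [HT HTq]].
have qS0 : 0 <= qmass q S by apply: sumr_ge0 => i _.
have M0 : 0 <= qmax q S.
  rewrite /qmax; elim/big_ind: _ => //.
  by move=> x y x0 y0; rewrite le_max x0.
have HM : forall i, i \in S -> q i <= qmax q S.
  by move=> i iS; rewrite /qmax; exact: (le_bigmax_cond 0 q iS).
have r1' : 1 <= qmass q S / (2 * qmax q S) by rewrite -truncn_gt0.
have Mpos : 0 < qmax q S.
  rewrite lt_def M0 andbT; apply/eqP => E; move: r1'; rewrite E mulr0 invr0 mulr0.
  by rewrite ler10.
have qpos : 2 * qmax q S <= qmass q S.
  by move: r1'; rewrite ler_pdivlMr ?mulr_gt0 // mul1r.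
have rle : (Rqs q S)%:R * (2 * qmax q S) <= qmass q S.
  by rewrite -ler_pdivlMr ?mulr_gt0 // /Rqs truncn_le divr_ge0 // mulr_ge0.
have qle1 : qmass q S <= 1.
  rewrite -q1 [X in _ <= X](bigID (fun i => i \in S)) /= lerDl.
  by apply: sumr_ge0 => i _.
set qS := qmass q S in qS0 qpos rle qle1 *.
set M := qmax q S in M0 HM Mpos qpos rle *.
set r := Rqs q S in r1 rle *.
have r0 : (0 < r)%N by [].
have rpos : 0 < r%:R :> R by rewrite ltr0n.
set c := qS / 4.
set w := c / r%:R.
have cpos : 0 < c by rewrite /c divr_gt0 //; have := Mpos; lra.
have wpos : 0 < w by rewrite /w divr_gt0.
have rw : r%:R * w = c by rewrite /w mulrC divfK // gt_eqF.
have Hs : r%:R * (w + M) <= \sum_(i in S) q i.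
  rewrite -/(qmass q S) -/qS mulrDr rw /c.
  have : r%:R * M * 2 <= qS by move: rle; rewrite mulrCA mulrC.
  lra.
have [g [b [Hb Hsum]]] := block_weights r0 q0 wpos M0 HM Hs.
pose f i := q i - b i.
pose h (j : 'I_r) i := if g i == j then r%:R * b i else 0.
have f0 i : 0 <= f i by rewrite /f subr_ge0; case/andP: (Hb i).
have h0 j i : 0 <= h j i.
  rewrite /h; case: ifP => // _; rewrite mulr_ge0 ?ler0n //; by case/andP: (Hb i).
have sumb : \sum_i b i = c.
  rewrite (partition_big g xpredT) //=.
  under eq_bigr do rewrite Hsum.
  by rewrite sumr_const card_ord -mulr_natl.
have Hf : \sum_i f i = 1 - c by rewrite /f sumrB q1 sumb.
have Hh j : \sum_i h j i = c.
  by rewrite /h -big_mkcond /= -big_distrr /= Hsum.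
have c1 : c < 1 by rewrite /c; lra.
exists (Tp f h c m T); split; first exact: Tp_valid.
move=> p' [p'0 p'1].
rewrite (sim_accept f0 h0 Hf Hh cpos c1 m0 HT p'0).
set p := ppx f h p'.
have pE i : p i = q i - b i + r%:R * b i * p' (g i).
  rewrite /p ppxE; congr (_ + _).
  rewrite (bigD1 (g i)) //= /h eqxx [X in _ + X]big1 ?addr0; first by rewrite mulrC.
  by move=> j Hj; rewrite eq_sym (negbTE Hj) mulr0.
have pd : is_distr p.
  split.
    move=> i; rewrite pE addr_ge0 //; first by rewrite subr_ge0; case/andP: (Hb i).
    by rewrite !mulr_ge0 ?ler0n ?p'0 //; case/andP: (Hb i).
  under eq_bigr do rewrite pE.
  rewrite big_split /= sumrB q1 sumb (partition_big g xpredT) //=.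
  transitivity (1 - c + \sum_(j < r) c * p' j); last by rewrite -big_distrr /= p'1 mulr1 subrK.
  congr (_ + _); apply: eq_bigr => j _.
  transitivity (\sum_(i | g i == j) r%:R * p' j * b i).
    by apply: eq_bigr => i /eqP ->; ring.
  by rewrite -big_distrr /= Hsum -rw; ring.
have dist : l1dist p q = c * l1dist p' (@unif R r).
  rewrite /l1dist big_distrr /= (partition_big g xpredT) //=.
  apply: eq_bigr => j _.
  transitivity (\sum_(i | g i == j) b i * `|r%:R * p' j - 1|).
    apply: eq_bigr => i /eqP <-; rewrite pE.
    have -> : q i - b i + r%:R * b i * p' (g i) - q i = b i * (r%:R * p' (g i) - 1) by ring.
    by rewrite normrM ger0_norm //; case/andP: (Hb i).
  rewrite -big_distrl /= Hsum /unif.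
  have -> : r%:R * p' j - 1 = r%:R * (p' j - 1 / r%:R) by field; rewrite gt_eqF.
  by rewrite normrM (ger0_norm (ltW rpos)) -rw; ring.
have [Hc Hfar] := HTq p pd.
split => H.
  apply: Hc; rewrite dist.
  apply: le_trans (ler_wpM2l (ltW cpos) H) _.
  rewrite /c le_eqVlt; apply/orP; left; apply/eqP; field; rewrite gt_eqF //; lra.
apply: Hfar; rewrite dist.
apply: le_trans (ler_wpM2l (ltW cpos) H).
rewrite /c le_eqVlt; apply/orP; left; apply/eqP; field; rewrite gt_eqF //; lra.
Qed.

Lemma qS_pos n (q : 'I_n -> R) (S : {set 'I_n}) :
  is_distr q -> (1 <= Rqs q S)%N -> 0 < qmass q S.
Proof.
move=> [q0 q1] r1.
have M0 : 0 <= qmax q S.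
  rewrite /qmax; elim/big_ind: _ => //.
  by move=> x y x0 y0; rewrite le_max x0.
have r1' : 1 <= qmass q S / (2 * qmax q S) by rewrite -truncn_gt0.
have Mpos : 0 < qmax q S.
  rewrite lt_def M0 andbT; apply/eqP => E; move: r1'; rewrite E mulr0 invr0 mulr0.
  by rewrite ler10.
have qpos : 2 * qmax q S <= qmass q S.
  by move: r1'; rewrite ler_pdivlMr ?mulr_gt0 // mul1r.
apply: lt_le_trans qpos; exact: mulr_gt0.
Qed.
End Final.

Unset Implicit Arguments. Set Strict Implicit.

Theorem theoremC1 (R : realType) (n : nat) (q : 'I_n -> R) (S : {set 'I_n})
    (e1 e2 d : R) :
  is_distr q -> S != finset.set0 -> (1 <= Rqs q S)%N ->
  0 <= e1 -> e1 < e2 -> 0 < d ->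
  (((4 / qmass q S)%:E *
     SC (@unif R (Rqs q S)) (4 * e1 / qmass q S) (4 * e2 / qmass q S) d)
   <= SC q e1 e2 d)%E.
Proof.
move=> Hq _ r1 _ _ _.
have qp := qS_pos Hq r1.
apply: le_ereal_inf_tmp => _ [m [m0 Hm] <-].
have H : (SC (@unif R (Rqs q S)) (4 * e1 / qmass q S) (4 * e2 / qmass q S) d
         <= (qmass q S / 4 * m)%:E)%E.
  apply: ge_ereal_inf; exists (qmass q S / 4 * m)%:E => //.
  exists (qmass q S / 4 * m) => //; split.
    by rewrite mulr_ge0 // divr_ge0 // ltW.
  exact: reduce.
apply: le_trans (lee_wpmul2l _ H) _; first by rewrite lee_fin divr_ge0 // ltW.
rewrite -EFinM lee_fin le_eqVlt; apply/orP; left; apply/eqP; field.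
by rewrite gt_eqF.
Qed.
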